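(* (1) For any finite alphabet $\Sigma$ and any $\lambda\in[0,1]$, there is a quantum automaton $\mathcal{A}$ over $\Sigma$ such that $f^{\mathrm{D}}_{\mathcal{A}}(w)=\lambda$ for all $w\in\Sigma^\omega$. (2) Let $\mathcal{A}$ and $\mathcal{B}$ be quantum automata over the same alphabet $\Sigma$ and $a,b\in\mathbb{C}$ with $|a|^2+|b|^2=1$. Then for every $w\in\Sigma^\omega$, $f^{\mathrm{D}}_{a\mathcal{A}\oplus b\mathcal{B}}(w)\ge\max\{|a|^2f^{\mathrm{D}}_{\mathcal{A}}(w),|b|^2f^{\mathrm{D}}_{\mathcal{B}}(w)\}$.
   Context: A quantum automaton is a tuple $\mathcal{A}=(\mathcal{H},|s_0\rangle,\Sigma,\{U_\sigma:\sigma\in\Sigma\},F)$ where $\mathcal{H}$ is a finite-dimensional complex Hilbert space, $|s_0\rangle$ a unit vector, $\Sigma$ a finite alphabet, each $U_\sigma$ unitary, and $F$ a subspace. For $w=\sigma_1\sigma_2\cdots\in\Sigma^\omega$, a unit vector $|\psi\rangle\in F$ and checkpoints $0\le n_1<n_2<\cdots$, the disturbing run is $|s_0\rangle$ (initial state) and for $n\ge1$: $|s_n\rangle=U_{\sigma_n}|\psi\rangle$ if $n-1=n_i$ for some $i$, else $|s_n\rangle=U_{\sigma_n}|s_{n-1}\rangle$; $f^{\mathrm{D}}_{\mathcal{A}}(w)=\sup_{|\psi\rangle}\sup_{\{n_i\}}\inf_{i\ge1}|\langle\psi|s_{n_i}\rangle|^2$ over unit $|\psi\rangle\in F$ and strictly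 increasing checkpoint sequences. The weighted direct sum of $\mathcal{A}=(\mathcal{H}^{\mathcal{A}},|s_0^{\mathcal{A}}\rangle,\Sigma,\{U^{\mathcal{A}}_\sigma\},F^{\mathcal{A}})$ and $\mathcal{B}=(\mathcal{H}^{\mathcal{B}},|s_0^{\mathcal{B}}\rangle,\Sigma,\{U^{\mathcal{B}}_\sigma\},F^{\mathcal{B}})$ is $a\mathcal{A}\oplus b\mathcal{B}=(\mathcal{H}^{\mathcal{A}}\oplus\mathcal{H}^{\mathcal{B}},a|s_0^{\mathcal{A}}\rangle\oplus b|s_0^{\mathcal{B}}\rangle,\Sigma,\{U^{\mathcal{A}}_\sigma\oplus U^{\mathcal{B}}_\sigma\},F^{\mathcal{A}}\oplus F^{\mathcal{B}})$. *)

(* Defs.v *)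
From HB Require Import structures.
From mathcomp Require Import all_boot all_order all_algebra.
From mathcomp Require Import boolp classical_sets reals.
From mathcomp Require Import complex.
Set Implicit Arguments. Unset Strict Implicit. Unset Printing Implicit Defensive.
Import Order.TTheory GRing.Theory Num.Theory.
Local Open Scope ring_scope.
Local Open Scope classical_set_scope.

Section QA.
Variable R : realType.
Local Notation C := (R[i]).

Definition adjmx m n (M : 'M[C]_(m, n)) : 'M[C]_(n, m) := (map_mx conjc M)^T.

Definition cinner n (u v : 'cV[C]_n) : C := \sum_(j < n) conjc (u j 0) * v j 0.

Definition sqmod (z : C) : R := (complex.Re z) ^+ 2 + (complex.Im z) ^+ 2.

Definition unit_vec n (u : 'cV[C]_n) : Prop := cinner u u = 1.
Definition unitary n (U : 'M[C]_n) : Prop := adjmx U *m U = 1%:M.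

(* Raw data of a quantum automaton over alphabet Sigma, Hilbert space C^qa_dim
   (column vectors).  The subspace F is the row space of qa_F, i.e.
   psi \in F  iff  (psi^T <= qa_F)%MS. *)
Record qaut (Sigma : finType) := QAut {
  qa_dim : nat;
  qa_s0 : 'cV[C]_qa_dim;
  qa_U : Sigma -> 'M[C]_qa_dim;
  qa_F : 'M[C]_qa_dim }.

Definition in_F (Sigma : finType) (A : qaut Sigma) (psi : 'cV[C]_(qa_dim A)) : Prop :=
  (psi^T <= qa_F A)%MS.

Definition is_qaut (Sigma : finType) (A : qaut Sigma) : Prop :=
  unit_vec (qa_s0 A) /\ forall s, unitary (qa_U A s).

(* The disturbing run.  w : nat -> Sigma, with w k = sigma_{k+1};
   ns : nat -> nat, with ns i = n_{i+1}.  run k = |s_k>. *)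
Fixpoint drun (Sigma : finType) (A : qaut Sigma) (w : nat -> Sigma)
    (psi : 'cV[C]_(qa_dim A)) (ns : nat -> nat) (k : nat) : 'cV[C]_(qa_dim A) :=
  match k with
  | 0 => qa_s0 A
  | k'.+1 => qa_U A (w k') *m
      (if `[< exists i, ns i = k' >] then psi else drun w psi ns k')
  end.

Definition strictly_incr (ns : nat -> nat) : Prop := forall i, (ns i < ns i.+1)%N.

Definition dvalue (Sigma : finType) (A : qaut Sigma) (w : nat -> Sigma)
    (psi : 'cV[C]_(qa_dim A)) (ns : nat -> nat) : R :=
  inf (range (fun i => sqmod (cinner psi (drun w psi ns (ns i))))).

Definition fD (Sigma : finType) (A : qaut Sigma) (w : nat -> Sigma) : R :=
  sup [set x | exists (psi : 'cV[C]_(qa_dim A)) (ns : nat -> nat),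
        [/\ in_F psi, unit_vec psi, strictly_incr ns & x = dvalue w psi ns]].

Definition wsum (Sigma : finType) (a b : C) (A B : qaut Sigma) : qaut Sigma :=
  @QAut Sigma (qa_dim A + qa_dim B)
    (col_mx (a *: qa_s0 A) (b *: qa_s0 B))
    (fun s => block_mx (qa_U A s) 0 0 (qa_U B s))
    (block_mx (qa_F A) 0 0 (qa_F B)).

End QA.

(* Main.v *)
Require Import Defs.
From HB Require Import structures.
From mathcomp Require Import all_boot all_order all_algebra.
From mathcomp Require Import boolp classical_sets reals.
From mathcomp Require Import complex.
From mathcomp Require Import ring lra zify.
Import Order.TTheory GRing.Theory Num.Theory.
Local Open Scope ring_scope.
Section S.
Variable R : realType.
Lemma sqmodM (x y : R[i]) : sqmod (x * y) = sqmod x * sqmod y.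
Proof. case: x => a b; case: y => c d; rewrite /sqmod /=. ring. Qed.
Lemma conj_mul_self (z : R[i]) : conjc z * z = real_complex R (sqmod z).
Proof. case: z => a b; rewrite /sqmod /=. apply/eqP; rewrite eq_complex /=. apply/andP; split; apply/eqP; ring. Qed.
Lemma Re_sum n (F : 'I_n -> R[i]) : complex.Re (\sum_(j < n) F j) = \sum_(j < n) complex.Re (F j).
Proof. elim/big_rec2: _ => //= j x y _ <-. by case: (F j); case: y. Qed.
Lemma Im_sum n (F : 'I_n -> R[i]) : complex.Im (\sum_(j < n) F j) = \sum_(j < n) complex.Im (F j).
Proof. elim/big_rec2: _ => //= j x y _ <-. by case: (F j); case: y. Qed.

Lemma sqmod_ge0 (z : R[i]) : 0 <= sqmod z.
Proof. rewrite /sqmod; apply: addr_ge0; exact: sqr_ge0. Qed.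

Lemma sqmodJ (z : R[i]) : sqmod (conjc z) = sqmod z.
Proof. case: z => a b; rewrite /sqmod /=. ring. Qed.

Lemma sqmod1 : sqmod (1 : R[i]) = 1.
Proof. rewrite /sqmod /=. ring. Qed.

Lemma cinner_col m1 m2 (u1 : 'cV[R[i]]_m1) (u2 : 'cV[R[i]]_m2) (v : 'cV[R[i]]_(m1 + m2)) :
  cinner (col_mx u1 u2) v = cinner u1 (usubmx v) + cinner u2 (dsubmx v).
Proof.
rewrite /cinner big_split_ord /=; congr (_ + _); apply: eq_bigr => i _.
  by rewrite col_mxEu mxE.
by rewrite col_mxEd mxE.
Qed.

Lemma cinner_col2 m1 m2 (u1 v1 : 'cV[R[i]]_m1) (u2 v2 : 'cV[R[i]]_m2) :
  cinner (col_mx u1 u2) (col_mx v1 v2) = cinner u1 v1 + cinner u2 v2.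
Proof. by rewrite cinner_col col_mxKu col_mxKd. Qed.

Lemma cinnerZr n (u v : 'cV[R[i]]_n) a : cinner u (a *: v) = a * cinner u v.
Proof. rewrite /cinner mulr_sumr; apply: eq_bigr => j _; rewrite mxE; ring. Qed.

Lemma cinnerZl n (u v : 'cV[R[i]]_n) a : cinner (a *: u) v = conjc a * cinner u v.
Proof. rewrite /cinner mulr_sumr; apply: eq_bigr => j _; rewrite mxE rmorphM; ring. Qed.

Lemma cinner0l n (v : 'cV[R[i]]_n) : cinner 0 v = 0.
Proof. rewrite /cinner big1 // => j _; rewrite mxE rmorph0 mul0r. done. Qed.

Lemma cinner_mx n (u v : 'cV[R[i]]_n) : cinner u v = (adjmx u *m v) 0 0.
Proof. rewrite /cinner /adjmx mxE; apply: eq_bigr => j _; rewrite !mxE. done. Qed.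

Lemma adjmxM m n p (A : 'M[R[i]]_(m, n)) (B : 'M[R[i]]_(n, p)) :
  adjmx (A *m B) = adjmx B *m adjmx A.
Proof. by rewrite /adjmx map_mxM trmx_mul. Qed.

Lemma unitary_pres n (U : 'M[R[i]]_n) v : unitary U -> cinner (U *m v) (U *m v) = cinner v v.
Proof.
move=> HU; rewrite !cinner_mx adjmxM -mulmxA (mulmxA (adjmx U)) HU mul1mx. done.
Qed.

Definition pres {n} (U : 'M[R[i]]_n) := forall v, cinner (U *m v) (U *m v) = cinner v v.

Lemma pres_block m n (U : 'M[R[i]]_m) (V : 'M[R[i]]_n) : pres U -> pres V ->
  pres (block_mx U 0 0 V).
Proof.
move=> HU HV v; rewrite -(vsubmxK v) mul_block_col !mul0mx addr0 add0r !cinner_col2.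
by rewrite HU HV.
Qed.

Lemma sum_bound n (f g h : 'I_n -> R) : \sum_(j < n) f j = 1 -> \sum_(j < n) g j = 1 ->
  (forall j, h j *+ 2 <= f j + g j) -> (forall j, - h j *+ 2 <= f j + g j) ->
  (\sum_(j < n) h j) ^+ 2 <= 1.
Proof.
move=> Hf Hg H1 H2.
have A : \sum_(j < n) h j *+ 2 <= 1 + 1 by rewrite -{1}Hf -Hg -big_split; apply: ler_sum => j _; exact: H1.
have B : \sum_(j < n) - h j *+ 2 <= 1 + 1 by rewrite -{1}Hf -Hg -big_split; apply: ler_sum => j _; exact: H2.
rewrite sumrMnl in A; rewrite sumrMnl sumrN in B.
move: A B; set x := \sum_(j < n) h j => A B.
rewrite -mulr_natr in A; rewrite -mulr_natr in B. nra.
Qed.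

Ltac sq_hints a b c d :=
  have := sqr_ge0 (a - c); have := sqr_ge0 (b - d); have := sqr_ge0 (a + c); have := sqr_ge0 (b + d);
  have := sqr_ge0 (a - d); have := sqr_ge0 (b - c); have := sqr_ge0 (a + d); have := sqr_ge0 (b + c); nra.

Lemma cbound n (u v : 'cV[R[i]]_n) : unit_vec u -> unit_vec v -> sqmod (cinner u v) <= 2.
Proof.
rewrite /unit_vec => Hu Hv.
have nrm : forall w : 'cV[R[i]]_n, cinner w w = 1 ->
  \sum_(j < n) (complex.Re (w j 0) ^+ 2 + complex.Im (w j 0) ^+ 2) = 1.
  move=> w Hw; have := congr1 (@complex.Re R) Hw; rewrite /cinner Re_sum /= => <-.
  by apply: eq_bigr => j _; case: (w j 0) => a b /=; ring.
have Hu' := nrm _ Hu; have Hv' := nrm _ Hv.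
have hRe : complex.Re (cinner u v) ^+ 2 <= 1.
  rewrite /cinner Re_sum; apply: (@sum_bound n _ _ (fun j => complex.Re (conjc (u j 0) * v j 0)) Hu' Hv') => j;
  case: (u j 0) => a b; case: (v j 0) => c d /=; rewrite -mulr_natr; sq_hints a b c d.
have hIm : complex.Im (cinner u v) ^+ 2 <= 1.
  rewrite /cinner Im_sum; apply: (@sum_bound n _ _ (fun j => complex.Im (conjc (u j 0) * v j 0)) Hu' Hv') => j;
  case: (u j 0) => a b; case: (v j 0) => c d /=; rewrite -mulr_natr; sq_hints a b c d.
rewrite /sqmod; lra.
Qed.

Local Open Scope classical_set_scope.

Lemma ns_ge (ns : nat -> nat) : strictly_incr ns -> forall i, (ns 0 + i <= ns i)%N.
Proof.
move=> H; elim=> [|i IH]; first by rewrite addn0.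
by rewrite addnS; apply: leq_ltn_trans IH (H i).
Qed.

Lemma drun_unit (Sigma : finType) (A : qaut R Sigma) (w : nat -> Sigma) (psi : 'cV[R[i]]_(qa_dim A)) (ns : nat -> nat) :
  unit_vec (qa_s0 A) -> (forall s, pres (qa_U A s)) -> unit_vec psi ->
  forall k, unit_vec (drun w psi ns k).
Proof.
move=> H0 HU Hp; elim=> [|k IH] //=.
rewrite /unit_vec HU; case: ifP => _ //.
Qed.

Lemma dvalue_ge0 (Sigma : finType) (A : qaut R Sigma) (w : nat -> Sigma) (psi : 'cV[R[i]]_(qa_dim A)) (ns : nat -> nat) :
  0 <= dvalue (A := A) w psi ns.
Proof.
apply: lb_le_inf; first by exists (sqmod (cinner psi (drun w psi ns (ns 0)))), 0.
by move=> y [i _ <-]; exact: sqmod_ge0.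
Qed.

Lemma dvalue_le (Sigma : finType) (A : qaut R Sigma) (w : nat -> Sigma) (psi : 'cV[R[i]]_(qa_dim A)) (ns : nat -> nat) i :
  dvalue (A := A) w psi ns <= sqmod (cinner psi (drun w psi ns (ns i))).
Proof.
apply: ge_inf; last by exists i.
by exists 0 => y [j _ <-]; exact: sqmod_ge0.
Qed.

Definition fDset {Sigma : finType} (A : qaut R Sigma) (w : nat -> Sigma) :=
  [set x | exists (psi : 'cV[R[i]]_(qa_dim A)) (ns : nat -> nat),
        [/\ in_F psi, unit_vec psi, strictly_incr ns & x = dvalue w psi ns]].

Lemma fD_ub (Sigma : finType) (A : qaut R Sigma) w :
  unit_vec (qa_s0 A) -> (forall s, pres (qa_U A s)) -> ubound (fDset A w) 2.
Proof.
move=> H0 HU x [psi [ns [_ Hp _ ->]]].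
apply: (le_trans (dvalue_le _ _ _ _ _ 0)).
apply: cbound => //; exact: drun_unit.
Qed.

Lemma fD_ge0 (Sigma : finType) (A : qaut R Sigma) w :
  unit_vec (qa_s0 A) -> (forall s, pres (qa_U A s)) -> 0 <= fD A w.
Proof.
move=> H0 HU; rewrite /fD -/(fDset A w).
have [[x Hx]|NE] := pselect (fDset A w !=set0); last first.
  rewrite (_ : fDset A w = set0) ?sup0 //; apply/seteqP; split => x Hx //.
  by exfalso; apply: NE; exists x.
apply: (le_trans _ (ub_le_sup (ex_intro _ 2 (fD_ub _ _ _ H0 HU)) Hx)).
by case: Hx => psi [ns [_ _ _ ->]]; exact: dvalue_ge0.
Qed.

Lemma cinner2 (u v : 'cV[R[i]]_2) :
  cinner u v = conjc (u 0 0) * v 0 0 + conjc (u ord_max 0) * v ord_max 0.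
Proof.
rewrite /cinner big_ord_recr big_ord1 /=.
by rewrite (_ : widen_ord _ ord0 = 0) //; apply: val_inj.
Qed.

Definition cst_s0 (lam : R) : 'cV[R[i]]_2 :=
  \col_i (if i == 0 then Complex (Num.sqrt lam) 0 else Complex (Num.sqrt (1 - lam)) 0).

Definition cstA (Sigma : finType) (lam : R) : qaut R Sigma :=
  @QAut R Sigma 2 (cst_s0 lam) (fun _ => 1%:M) (delta_mx 0 0).

Lemma cstA_qaut (Sigma : finType) (lam : R) : 0 <= lam <= 1 -> is_qaut (cstA Sigma lam).
Proof.
case/andP => l0 l1; split.
  rewrite /unit_vec cinner2 /cst_s0 !mxE /=.
  have h1 : Num.sqrt lam ^+ 2 = lam by rewrite sqr_sqrtr.
  have h2 : Num.sqrt (1 - lam) ^+ 2 = 1 - lam by rewrite sqr_sqrtr // subr_ge0.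
  apply/eqP; rewrite eq_complex /=; apply/andP; split; apply/eqP; last by ring.
  rewrite -!expr2 h1 h2 ; ring.
move=> s; rewrite /unitary /adjmx /= map_scalar_mx rmorph1 tr_scalar_mx mul1mx //.
Qed.
Lemma cst_run_before (Sigma : finType) (lam : R) (w : nat -> Sigma)
  (psi : 'cV[R[i]]_2) (ns : nat -> nat) : strictly_incr ns ->
  forall k, (k <= ns 0)%N -> drun (A := cstA Sigma lam) w psi ns k = cst_s0 lam.
Proof.
move=> Hns; elim=> [|k IH] Hk //=.
rewrite mul1mx asboolF ?IH //; first exact: ltnW.
move=> [i Hi]; have := ns_ge _ Hns i; lia.
Qed.

Lemma cst_run_after (Sigma : finType) (lam : R) (w : nat -> Sigma)
  (psi : 'cV[R[i]]_2) (ns : nat -> nat) : strictly_incr ns ->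
  forall k, (ns 0 < k)%N -> drun (A := cstA Sigma lam) w psi ns k = psi.
Proof.
move=> Hns; elim=> [|k IH] Hk //=.
rewrite mul1mx; case: ifP => // /asboolPn NE; apply: IH.
have : k != ns 0 by apply/eqP => E; apply: NE; exists 0.
move=> H; rewrite ltn_neqAle -ltnS Hk andbT eq_sym; exact: H.
Qed.

Lemma inF_cst (Sigma : finType) (lam : R) (psi : 'cV[R[i]]_2) :
  in_F (A := cstA Sigma lam) psi -> psi ord_max 0 = 0.
Proof.
move/submxP => [D HD]; move: D HD => /= D HD.
have := congr1 (fun M : 'M[R[i]]_(1, 2) => M 0 ord_max) HD; rewrite !mxE => ->.
by rewrite big1 // => k _; rewrite mxE /= andbF mulr0.
Qed.

Lemma sqmod_unit1 (psi : 'cV[R[i]]_2) : psi ord_max 0 = 0 -> unit_vec psi -> sqmod (psi 0 0) = 1.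
Proof.
rewrite /unit_vec cinner2 => -> ; rewrite rmorph0 mul0r addr0 conj_mul_self => H.
by have := congr1 (@complex.Re R) H.
Qed.

Lemma cst_dvalue (Sigma : finType) (lam : R) (w : nat -> Sigma)
  (psi : 'cV[R[i]]_2) (ns : nat -> nat) : 0 <= lam <= 1 ->
  in_F (A := cstA Sigma lam) psi -> unit_vec psi -> strictly_incr ns ->
  dvalue (A := cstA Sigma lam) w psi ns = lam.
Proof.
case/andP => l0 l1 HF Hu Hns.
have Hmax := inF_cst _ _ _ HF.
have g0 : sqmod (cinner psi (drun (A := cstA Sigma lam) w psi ns (ns 0))) = lam.
  rewrite cst_run_before // cinner2 Hmax rmorph0 mul0r addr0 sqmodM sqmodJ sqmod_unit1 // mul1r.
  rewrite /cst_s0 mxE /= /sqmod /= sqr_sqrtr //; ring.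
have gi : forall i, (0 < i)%N -> sqmod (cinner psi (drun (A := cstA Sigma lam) w psi ns (ns i))) = 1.
  move=> i Hi; rewrite cst_run_after //; last by have := ns_ge _ Hns i; lia.
  by rewrite Hu sqmod1.
apply/le_anti/andP; split; first by rewrite -{2}g0; apply: dvalue_le.
apply: lb_le_inf; first by exists lam, 0.
move=> y [[|i] _ <-]; first by rewrite g0.
by rewrite gi.
Qed.

Lemma cst_fD (Sigma : finType) (lam : R) (w : nat -> Sigma) : 0 <= lam <= 1 ->
  fD (cstA Sigma lam) w = lam.
Proof.
move=> Hl; rewrite /fD -/(fDset (cstA Sigma lam) w).
rewrite (_ : fDset (cstA Sigma lam) w = [set lam]) ?sup1 //.
apply/seteqP; split => x.
  by move=> [psi [ns [HF Hu Hns ->]]]; rewrite /= cst_dvalue.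
move=> -> /=.
pose e1 : 'cV[R[i]]_2 := (delta_mx 0 0 : 'rV[R[i]]_2)^T.
have HF : in_F (A := cstA Sigma lam) e1.
  rewrite /in_F /e1 trmxK /=.
  have -> : (delta_mx 0 0 : 'rV[R[i]]_2) = delta_mx (0:'I_1) (0:'I_2) *m delta_mx (0:'I_2) (0:'I_2) by rewrite mul_delta_mx.
  exact: submxMl.
have Hu : unit_vec e1.
  rewrite /unit_vec cinner2 /e1 !mxE /= mulr1 mulr0 addr0; apply/eqP; rewrite eq_complex /= oppr0 !eqxx //.
have Hns : strictly_incr id by move=> i; exact: ltnSn.
exists e1, id; split => //.
by rewrite cst_dvalue.
Qed.
Lemma sup_scale (c : R) (SA SS : set R) : 0 <= c -> 0 <= sup SS -> has_ubound SS ->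
  (forall x, SA x -> exists2 y, SS y & c * x <= y) -> c * sup SA <= sup SS.
Proof.
move=> c0 s0 hub H.
have [[x0 Hx0]|NE] := pselect (SA !=set0); last first.
  rewrite (_ : SA = set0) ?sup0 ?mulr0 //; apply/seteqP; split => x Hx //.
  by exfalso; apply: NE; exists x.
have [->|cn0] := eqVneq c 0; first by rewrite mul0r.
have cp : 0 < c by rewrite lt_def cn0 c0.
rewrite mulrC -ler_pdivlMr //; apply: ge_sup; first by exists x0.
move=> x /H [y Hy Hxy]; rewrite ler_pdivlMr // mulrC.
exact: le_trans Hxy (ub_le_sup hub Hy).
Qed.

Section WS.
Variables (Sigma : finType) (A B : qaut R Sigma) (a b : R[i]).
Local Notation S := (wsum a b A B).

Lemma wsum_runA (w : nat -> Sigma) (psiA : 'cV[R[i]]_(qa_dim A)) (ns : nat -> nat) :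
  strictly_incr ns -> forall k,
  usubmx (drun (A := S) w (col_mx psiA 0) ns k : 'cV_(qa_dim A + qa_dim B)) =
  if (k <= ns 0)%N then a *: drun w psiA ns k else drun w psiA ns k.
Proof.
move=> Hns; elim=> [|k IH] /=; first by rewrite col_mxKu.
case: ifP => Hc.
  rewrite mul_block_col mul0mx addr0 col_mxKu.
  move/asboolP: Hc => [i Hi]; have := ns_ge _ Hns i.
  case: ifP => // Hk; lia.
rewrite -{1}(vsubmxK (drun (A := S) w (col_mx psiA 0) ns k : 'cV_(qa_dim A + qa_dim B))).
rewrite mul_block_col mul0mx addr0 col_mxKu IH.
case: (leqP k.+1 (ns 0)) => Hk1.
  by rewrite (ltnW Hk1) scalemxAr.
have Hk : (k <= ns 0)%N = false.
  apply/negbTE; rewrite -ltnNge ltn_neqAle -ltnS Hk1.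
  rewrite andbT; apply/eqP => E; move/asboolPn: Hc; apply; by exists 0.
by rewrite Hk.
Qed.

Lemma wsum_runB (w : nat -> Sigma) (psiB : 'cV[R[i]]_(qa_dim B)) (ns : nat -> nat) :
  strictly_incr ns -> forall k,
  dsubmx (drun (A := S) w (col_mx 0 psiB) ns k : 'cV_(qa_dim A + qa_dim B)) =
  if (k <= ns 0)%N then b *: drun w psiB ns k else drun w psiB ns k.
Proof.
move=> Hns; elim=> [|k IH] /=; first by rewrite col_mxKd.
case: ifP => Hc.
  rewrite mul_block_col col_mxKd mul0mx add0r.
  move/asboolP: Hc => [i Hi]; have := ns_ge _ Hns i.
  case: ifP => // Hk; lia.
rewrite -{1}(vsubmxK (drun (A := S) w (col_mx 0 psiB) ns k : 'cV_(qa_dim A + qa_dim B))).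
rewrite mul_block_col col_mxKd mul0mx add0r IH.
case: (leqP k.+1 (ns 0)) => Hk1.
  by rewrite (ltnW Hk1) scalemxAr.
have Hk : (k <= ns 0)%N = false.
  apply/negbTE; rewrite -ltnNge ltn_neqAle -ltnS Hk1.
  rewrite andbT; apply/eqP => E; move/asboolPn: Hc; apply; by exists 0.
by rewrite Hk.
Qed.

Lemma wsum_valA (w : nat -> Sigma) (psiA : 'cV[R[i]]_(qa_dim A)) (ns : nat -> nat) :
  strictly_incr ns -> sqmod a <= 1 ->
  sqmod a * dvalue w psiA ns <= dvalue (A := S) w (col_mx psiA 0) ns.
Proof.
move=> Hns Ha; apply: lb_le_inf; first by eexists; exists 0.
move=> y [i _ <-].
apply: (le_trans (ler_wpM2l (sqmod_ge0 a) (dvalue_le _ _ _ _ _ i))).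
rewrite cinner_col cinner0l addr0 wsum_runA //.
case: ifP => _; first by rewrite cinnerZr sqmodM.
have := sqmod_ge0 (cinner psiA (drun w psiA ns (ns i))); have := sqmod_ge0 a; nra.
Qed.

Lemma wsum_valB (w : nat -> Sigma) (psiB : 'cV[R[i]]_(qa_dim B)) (ns : nat -> nat) :
  strictly_incr ns -> sqmod b <= 1 ->
  sqmod b * dvalue w psiB ns <= dvalue (A := S) w (col_mx 0 psiB) ns.
Proof.
move=> Hns Hb; apply: lb_le_inf; first by eexists; exists 0.
move=> y [i _ <-].
apply: (le_trans (ler_wpM2l (sqmod_ge0 b) (dvalue_le _ _ _ _ _ i))).
rewrite cinner_col cinner0l add0r wsum_runB //.
case: ifP => _; first by rewrite cinnerZr sqmodM.
have := sqmod_ge0 (cinner psiB (drun w psiB ns (ns i))); have := sqmod_ge0 b; nra.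
Qed.

Lemma wsum_inFA (psiA : 'cV[R[i]]_(qa_dim A)) : in_F psiA ->
  in_F (A := S) (col_mx psiA 0).
Proof.
move/submxP => [D HD]; rewrite /in_F /= tr_col_mx trmx0 HD.
have -> : row_mx (D *m qa_F A) (0 : 'M_(1, qa_dim B)) =
  row_mx D (0 : 'M_(1, qa_dim B)) *m block_mx (qa_F A) 0 0 (qa_F B).
  by rewrite mul_row_block !mul0mx !mulmx0 !addr0.
exact: submxMl.
Qed.

Lemma wsum_inFB (psiB : 'cV[R[i]]_(qa_dim B)) : in_F psiB ->
  in_F (A := S) (col_mx 0 psiB).
Proof.
move/submxP => [D HD]; rewrite /in_F /= tr_col_mx trmx0 HD.
have -> : row_mx (0 : 'M_(1, qa_dim A)) (D *m qa_F B) =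
  row_mx (0 : 'M_(1, qa_dim A)) D *m block_mx (qa_F A) 0 0 (qa_F B).
  by rewrite mul_row_block !mul0mx !mulmx0 !add0r.
exact: submxMl.
Qed.

Lemma wsum_unit0 : is_qaut A -> is_qaut B -> sqmod a + sqmod b = 1 -> unit_vec (qa_s0 S).
Proof.
move=> [HA _] [HB _] Hab; rewrite /unit_vec /= cinner_col2 !cinnerZl !cinnerZr HA HB !mulr1.
by rewrite !conj_mul_self -rmorphD Hab rmorph1.
Qed.

Lemma wsum_pres : is_qaut A -> is_qaut B -> forall s, pres (qa_U S s).
Proof.
move=> [_ HA] [_ HB] s /=; apply: pres_block => v; exact: unitary_pres.
Qed.
End WS.

Lemma part1 : forall (Sigma : finType) (lam : R), 0 <= lam <= 1 ->
     exists A : qaut R Sigma, is_qaut A /\ forall w : nat -> Sigma, fD A w = lam.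
Proof.
move=> Sigma lam Hl; exists (cstA Sigma lam); split; first exact: cstA_qaut.
move=> w; exact: cst_fD.
Qed.

Lemma part2 : forall (Sigma : finType) (A B : qaut R Sigma) (a b : R[i]),
     is_qaut A -> is_qaut B -> sqmod a + sqmod b = 1 ->
     forall w : nat -> Sigma,
       Num.max (sqmod a * fD A w) (sqmod b * fD B w) <= fD (wsum a b A B) w.
Proof.
move=> Sigma A B a b HA HB Hab w.
have Ha : sqmod a <= 1 by have := sqmod_ge0 b; lra.
have Hb : sqmod b <= 1 by have := sqmod_ge0 a; lra.
have H0 := wsum_unit0 _ _ _ _ _ HA HB Hab; have HU : forall s, pres (qa_U (wsum a b A B) s) by apply: wsum_pres.
have hub := ex_intro _ 2 (fD_ub _ _ w H0 HU).
have s0 := fD_ge0 _ _ w H0 HU.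
rewrite ge_max; apply/andP; split.
  apply: sup_scale => //; first exact: sqmod_ge0.
  move=> x [psi [ns [HF Hu Hns ->]]].
  exists (dvalue (A := wsum a b A B) w (col_mx psi 0) ns); last exact: wsum_valA.
  exists (col_mx psi 0), ns; split => //; first exact: wsum_inFA.
  by rewrite /unit_vec cinner_col2 cinner0l addr0.
apply: sup_scale => //; first exact: sqmod_ge0.
move=> x [psi [ns [HF Hu Hns ->]]].
exists (dvalue (A := wsum a b A B) w (col_mx 0 psi) ns); last exact: wsum_valB.
exists (col_mx 0 psi), ns; split => //; first exact: wsum_inFB.
by rewrite /unit_vec cinner_col2 cinner0l add0r.
Qed.
End S.

Theorem proposition5 (R : realType) :
  (forall (Sigma : finType) (lam : R), 0 <= lam <= 1 ->
     exists A : qaut R Sigma, is_qaut A /\ forall w : nat -> Sigma, fD A w = lam)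
  /\
  (forall (Sigma : finType) (A B : qaut R Sigma) (a b : R[i]),
     is_qaut A -> is_qaut B -> sqmod a + sqmod b = 1 ->
     forall w : nat -> Sigma,
       Num.max (sqmod a * fD A w) (sqmod b * fD B w) <= fD (wsum a b A B) w).
Proof. split; [exact: part1 | exact: part2]. Qed.
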